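(* Suppose Assumptions 1, 2 and 3 hold and that both of the following second-order cone programs are feasible: (P1) minimize $\|\mathbf z-\mu^*\|_U$ over $\mathbf z\in\mathbb R^{\mathbb S}$ subject to $\sum_{s\neq\tilde s}\bar\pi^*(1|s)z(s)\ge\alpha$, $\mathbf z\mathbf 1^\top=1$, $\mathbf z\ge0$; (P2) minimize $\|\mathbf z-\mu^*\|_U$ over $\mathbf z\in\mathbb R^{\mathbb S}$ subject to $\sum_{s\neq\tilde s}\bar\pi^*(0|s)z(s)\ge1-\alpha$, $\mathbf z\mathbf 1^\top=1$, $\mathbf z\ge0$. Let $\eta_1,\eta_2$ be their optimal values, $\eta=\min(\eta_1,\eta_2)$, and $\epsilon^{\mathrm{fe}}_N=2\sqrt2\,\lambda_U^{1/2}(|S^\emptyset|+1)/N$. Then for every system state $x$ of the $N$-armed system and every $D\subseteq[N]$ with $\|x(D)-m(D)\mu^*\|_U\le\eta m(D)-\epsilon^{\mathrm{fe}}_N$, $$\sum_{s\neq\tilde s}\bar\pi^*(1|s)x(D,s)\le\alpha m(D)-\frac{|S^\emptyset|+1}{N}\quad\text{and}\quad\sum_{s\neq\tilde s}\bar\pi^*(0|s)x(D,s)\le(1-\alpha)m(D)-\frac{|S^\emptyset|+1}{N}.$$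
   Context: Single-armed MDP $(\mathbb S,\{0,1\},P,r)$, finite $\mathbb S$, budget $\alpha\in(0,1)$; $N$-armed system with arm states $S(i)$; a system state $x$ assigns to $D\subseteq[N]$ the row vector $x(D)$ with $x(D,s)=\frac1N\#\{i\in D:S(i)=s\}$; $m(D)=|D|/N$. LP relaxation: maximize $\sum r(s,a)y(s,a)$ over $y\ge0$ s.t. $\sum_sy(s,1)=\alpha$, $\sum_{s',a}y(s',a)P(s',a,s)=\sum_ay(s,a)$ for all $s$, $\sum y=1$; $y^*$ a fixed optimal solution. $\bar\pi^*(a|s)=y^*(s,a)/(y^*(s,0)+y^*(s,1))$ if denominator $>0$, else $1/2$; $P_{\bar\pi^*}(s,s')=\sum_a\bar\pi^*(a|s)P(s,a,s')$; $\mu^*(s)=y^*(s,0)+y^*(s,1)$; $\mathbf 1$ all-ones row vector. Assumption 1: $1$ is a simple eigenvalue of $P_{\bar\pi^*}$, others of modulus $<1$. Assumption 2: unique $\tilde s$ with $y^*(\tilde s,0),y^*(\tilde s,1)>0$. $\Phi=P_{\bar\pi^*}-\mathbf 1^\top\mu^*-(c-\alpha\mathbf 1)^\top(P_1(\tilde s)-P_0(\tilde s))$, $c=(\bar\pi^*(1|s))_s$, $P_a(\tilde s)=(P(\tilde s,a,s))_s$. Assumption 3: all eigenvalues of $\Phi$ have modulus $<1$. $S^\emptyset=\{s:y^*(s,1)=y^*(s,0)=0\}$. $U=\sum_{k\ge0}\Phi^k(\Phi^\top)^k$, $\|v\|_U=\sqrt{vUv^\top}$, $\lambda_U$ the largest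 eigenvalue of $U$. *)

(* Defs.v *)
(* R : realType; the finite state space
   S is represented as 'I_n; action 0 = false, action 1 = true. *)
From HB Require Import structures.
From mathcomp Require Import all_boot all_order all_algebra.
From mathcomp Require Import all_classical all_reals all_analysis.
From mathcomp Require Import complex.
Set Implicit Arguments. Unset Strict Implicit. Unset Printing Implicit Defensive.
Import Order.TTheory GRing.Theory Num.Theory.
Local Open Scope ring_scope.
Local Open Scope classical_set_scope.

Section Defs.
Variables (R : realType) (n : nat).

Definition stochastic (P : 'I_n -> bool -> 'I_n -> R) : Prop :=
  (forall s a s', 0 <= P s a s') /\ (forall s a, \sum_(s' < n) P s a s' = 1).

Definition LP_feasible (P : 'I_n -> bool -> 'I_n -> R) (alpha : R)
    (y : 'I_n -> bool -> R) : Prop :=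
  [/\ (forall s a, 0 <= y s a),
      \sum_(s < n) y s true = alpha,
      (forall s, \sum_(s' < n) \sum_(a : bool) y s' a * P s' a s = \sum_(a : bool) y s a)
    & \sum_(s < n) \sum_(a : bool) y s a = 1].

Definition LP_objective (r : 'I_n -> bool -> R) (y : 'I_n -> bool -> R) : R :=
  \sum_(s < n) \sum_(a : bool) r s a * y s a.

Definition LP_optimal P r alpha (y : 'I_n -> bool -> R) : Prop :=
  LP_feasible P alpha y /\
  forall y', LP_feasible P alpha y' -> LP_objective r y' <= LP_objective r y.

Definition pibar (y : 'I_n -> bool -> R) (a : bool) (s : 'I_n) : R :=
  if 0 < y s false + y s true then y s a / (y s false + y s true) else 1 / 2.

Definition Ppibar (P : 'I_n -> bool -> 'I_n -> R) (y : 'I_n -> bool -> R) : 'M[R]_n :=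
  \matrix_(s, s') \sum_(a : bool) pibar y a s * P s a s'.

Definition mustar (y : 'I_n -> bool -> R) : 'rV[R]_n :=
  \row_s (y s false + y s true).

Definition onesr : 'rV[R]_n := const_mx 1.

Definition cvec (y : 'I_n -> bool -> R) : 'rV[R]_n := \row_s pibar y true s.

Definition Prow (P : 'I_n -> bool -> 'I_n -> R) (st : 'I_n) (a : bool) : 'rV[R]_n :=
  \row_s P st a s.

Definition Phi P y alpha (st : 'I_n) : 'M[R]_n :=
  Ppibar P y - onesr^T *m mustar y
  - (cvec y - alpha *: onesr)^T *m (Prow P st true - Prow P st false).

(* complex eigenvalues of a real square matrix *)
Definition cmx (A : 'M[R]_n) : 'M[R[i]]_n := map_mx (fun x => x%:C%C) A.

Definition assumption1 (A : 'M[R]_n) : Prop :=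
  mup (1 : R[i]) (char_poly (cmx A)) = 1%N /\
  forall z : R[i], eigenvalue (cmx A) z -> z != 1 -> `|z| < 1.

Definition all_eig_lt1 (A : 'M[R]_n) : Prop :=
  forall z : R[i], eigenvalue (cmx A) z -> `|z| < 1.

Definition Umx (A : 'M[R]_n) : 'M[R]_n :=
  \matrix_(i, j) limn (fun m : nat => \sum_(k < m) (A ^+ k *m (A^T) ^+ k) i j).

Definition Unorm (U : 'M[R]_n) (v : 'rV[R]_n) : R :=
  Num.sqrt ((v *m U *m v^T) ord0 ord0).

Definition lambda_max (U : 'M[R]_n) : R := sup [set l : R | eigenvalue U l].

Definition Sempty (y : 'I_n -> bool -> R) : {set 'I_n} :=
  [set s | (y s true == 0) && (y s false == 0)].

(* feasible sets of the SOCPs (P1) (a = true) and (P2) (a = false) *)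
Definition socp_feasible (y : 'I_n -> bool -> R) (st : 'I_n) (a : bool) (rhs : R)
    (z : 'rV[R]_n) : Prop :=
  [/\ \sum_(s < n | s != st) pibar y a s * z ord0 s >= rhs,
      z *m onesr^T = 1 & forall s, 0 <= z ord0 s].

Definition socp_value (U : 'M[R]_n) (y : 'I_n -> bool -> R) st a rhs : R :=
  inf [set Unorm U (z - mustar y) | z in socp_feasible y st a rhs].

(* N-armed system: arm i has state arm i; x(D) and m(D) *)
Definition xD (N : nat) (arm : 'I_N -> 'I_n) (D : {set 'I_N}) : 'rV[R]_n :=
  \row_s (#|[set i in D | arm i == s]|%:R / N%:R).

Definition mD (N : nat) (D : {set 'I_N}) : R := #|D|%:R / N%:R.

End Defs.

(* Main.v *)
Require Import Defs.
From HB Require Import structures.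
From mathcomp Require Import all_boot all_order all_algebra.
From mathcomp Require Import all_classical all_reals all_analysis.
From mathcomp Require Import complex.
Import Order.TTheory GRing.Theory Num.Theory.
Local Open Scope ring_scope.

From mathcomp Require Import ring lra.

Module PartA.
Import Order.TTheory GRing.Theory Num.Theory.
Set Implicit Arguments. Unset Strict Implicit. Unset Printing Implicit Defensive.
Local Open Scope ring_scope.

Section NC.
Variable R : realType.
Local Notation C := (R[i]).
Definition nc (z : C) : R := complex.Re `|z|.
Lemma ncE (z : C) : `|z| = (nc z)%:C%C.
Proof. by rewrite /nc normc_def. Qed.
Lemma nc_ge0 (z : C) : 0 <= nc z.
Proof. by rewrite -ler0c -ncE. Qed.
Lemma ncD (x y : C) : nc (x + y) <= nc x + nc y.
Proof. by rewrite -lecR rmorphD /= -!ncE ler_normD. Qed.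
Lemma ncM (x y : C) : nc (x * y) = nc x * nc y.
Proof. by apply: complexI; rewrite rmorphM /= -!ncE normrM. Qed.
Lemma nc_real (x : R) : nc (x%:C)%C = `|x|.
Proof. by rewrite /nc normc_def /= expr0n /= addr0 sqrtr_sqr. Qed.
Lemma nc0 : nc 0 = 0.
Proof. by rewrite -(rmorph0 (real_complex R)) nc_real normr0. Qed.
Lemma nc1 : nc 1 = 1.
Proof. by rewrite -(rmorph1 (real_complex R)) nc_real normr1. Qed.
Lemma nc_sum m (F : 'I_m -> C) : nc (\sum_(i < m) F i) <= \sum_(i < m) nc (F i).
Proof.
elim/big_ind2: _ => //; first by rewrite nc0.
move=> x1 x2 y1 y2 h1 h2; apply: le_trans (ncD _ _) _; exact: lerD.
Qed.
Lemma nc_lt1 (z : C) : `|z| < 1 -> nc z < 1.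
Proof. by rewrite ncE -(rmorph1 (real_complex R)) ltcR. Qed.
Lemma ncX (z : C) k : nc (z ^+ k) = nc z ^+ k.
Proof. elim: k => [|k IH]; first by rewrite !expr0 nc1. by rewrite !exprS ncM IH. Qed.
Lemma ncV (z : C) : nc (z^-1) = (nc z)^-1.
Proof. by apply: complexI; rewrite fmorphV /= -!ncE normfV. Qed.

Definition rowb m p (M : 'M[C]_(m, p)) (c : R) := forall i, \sum_j nc (M i j) <= c.

Lemma rowb_mul m p q (M : 'M[C]_(m, p)) (N : 'M[C]_(p, q)) (a b : R) :
  rowb M a -> rowb N b -> 0 <= b -> rowb (M *m N) (a * b).
Proof.
move=> hM hN b0 i.
apply: (@le_trans _ _ (\sum_j \sum_l nc (M i l) * nc (N l j))).
  apply: ler_sum => j _; rewrite mxE; apply: le_trans (nc_sum _) _.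
  by apply: ler_sum => l _; rewrite ncM.
rewrite exchange_big /=.
apply: (@le_trans _ _ (\sum_l nc (M i l) * b)).
  apply: ler_sum => l _; rewrite -mulr_sumr; apply: ler_wpM2l; first exact: nc_ge0.
  exact: hN.
by rewrite -mulr_suml; apply: ler_wpM2r.
Qed.

Lemma rowb_entry m p (M : 'M[C]_(m, p)) c i j : rowb M c -> nc (M i j) <= c.
Proof.
move=> h; apply: le_trans (h i); rewrite (bigD1 j) //= lerDl.
by apply: sumr_ge0 => l _; exact: nc_ge0.
Qed.

Lemma rowb_total m p (M : 'M[C]_(m, p)) : rowb M (\sum_i \sum_j nc (M i j)).
Proof.
move=> i; rewrite (bigD1 i) //= lerDl.
by apply: sumr_ge0 => l _; apply: sumr_ge0 => j _; exact: nc_ge0.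
Qed.

Lemma rowb1 p : rowb (1%:M : 'M[C]_p) 1.
Proof.
move=> i; rewrite (bigD1 i) //= big1 ?addr0; first by rewrite mxE eqxx nc1.
by move=> j /negbTE ji; rewrite mxE eq_sym ji nc0.
Qed.

Lemma rowb_pow p (B : 'M[C]_p.+1) q : rowb B q -> 0 <= q ->
  forall k, rowb (B ^+ k) (q ^+ k).
Proof.
move=> hB q0; elim=> [|k IH]; first by rewrite expr0; exact: rowb1.
rewrite exprS [q ^+ _]exprS -mulmxE; apply: rowb_mul => //; exact: exprn_ge0.
Qed.

Lemma cmxE n (A : 'M[R]_n) : cmx A = map_mx (real_complex R) A.
Proof. by []. Qed.

Lemma pow_bound (n : nat) (A : 'M[R]_n.+1) : all_eig_lt1 A ->
  exists c q : R, [/\ 0 <= q, q < 1 & forall k i j, `|(A ^+ k) i j| <= c * q ^+ k].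
Proof.
move=> hA.
have [P Pu Ptr] := Schur (cmx A) (ltn0Sn n).
have Pun := unitarymx_unit Pu.
set T := conjmx P (cmx A) in Ptr.
have Ttrig : is_trig_mx T := Ptr.
have TE : T = P *m cmx A *m invmx P by rewrite /T /conjmx pinvmxE.
clearbody T.
have AE : cmx A = invmx P *m T *m P.
  by rewrite TE !mulmxA mulVmx // mul1mx -mulmxA mulVmx // mulmx1.
have Tdiag : forall i, nc (T i i) < 1.
  move=> i; apply: nc_lt1; apply: hA.
  have : eigenvalue T (T i i).
    rewrite eigenvalue_root_char char_poly_trig // /root horner_prod.
    by apply/prodf_eq0; exists i => //; rewrite hornerXsubC subrr.
  move=> /eigenvalueP [v vT v0]; apply/eigenvalueP; exists (v *m P).
    by rewrite AE !mulmxA -(mulmxA v) mulmxV // mulmx1 vT scalemxAl.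
  by rewrite mulmx_free_eq0 // row_free_unit.
set r := \big[Num.max/0]_i nc (T i i).
have r0 : 0 <= r by exact: bigmax_ge_id.
have r1 : r < 1 by apply/bigmax_ltP; split => // i _; exact: Tdiag.
have rT : forall i, nc (T i i) <= r by move=> i; exact: le_bigmax.
set S := \sum_i \sum_j nc (T i j).
have S0 : 0 <= S by apply: sumr_ge0 => i _; apply: sumr_ge0 => j _; exact: nc_ge0.
set e := (1 - r) / (2 * (S + 1)).
have eE : e * (2 * (S + 1)) = 1 - r by rewrite /e mulfVK // mulf_neq0 // lt0r_neq0 // ltr_pwDr.
have e0 : 0 < e by rewrite /e divr_gt0 ?subr_gt0 // mulr_gt0 // ltr_pwDr.
have e1 : e <= 1 by nra.
set q := r + e * S.
have q0 : 0 <= q by rewrite addr_ge0 // mulr_ge0 // ltW.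
have q1 : q < 1 by rewrite /q; nra.
exists ((\sum_i \sum_j nc ((invmx P *m diag_mx (\row_i (e%:C%C^-1 ^+ i))) i j)) *
        (\sum_i \sum_j nc ((diag_mx (\row_i (e%:C%C ^+ i)) *m P) i j))), q.
split => //.
set Dd := diag_mx (\row_i (e%:C%C ^+ i)).
set Di := diag_mx (\row_i (e%:C%C^-1 ^+ i)).
have eC0 : e%:C%C != 0.
  by apply/eqP => /(congr1 (@complex.Re R)) /= => h; move: e0; rewrite h ltxx.
have ncE0 : nc (e%:C%C) = e by rewrite nc_real gtr0_norm.
have DiDd : Di *m Dd = 1%:M.
  rewrite /Di mul_diag_mx; apply/matrixP => i j; rewrite !mxE.
  case: (eqVneq i j) => [->|ij]; last by rewrite mulr0n mulr0.
  by rewrite !mulr1n exprVn mulVf // expf_neq0.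
have DdDi : Dd *m Di = 1%:M.
  rewrite /Dd mul_diag_mx; apply/matrixP => i j; rewrite !mxE.
  case: (eqVneq i j) => [->|ij]; last by rewrite mulr0n mulr0.
  by rewrite !mulr1n exprVn mulfV // expf_neq0.
set B := Dd *m T *m Di.
have BkE : forall k, Di *m B ^+ k *m Dd = T ^+ k.
  elim=> [|k IH]; first by rewrite !expr0 mulmx1 DiDd.
  rewrite exprS [T ^+ _.+1]exprS -!mulmxE -IH /B !mulmxA.
  by rewrite DiDd mul1mx.
have AkT : forall k, cmx A ^+ k = invmx P *m T ^+ k *m P.
  elim=> [|k IH]. 
    rewrite !expr0; apply/esym. rewrite mulmx1. exact: mulVmx.
  have -> : cmx A ^+ k.+1 = cmx A *m cmx A ^+ k by rewrite exprS mulmxE.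
  have -> : T ^+ k.+1 = T *m T ^+ k by rewrite exprS mulmxE.
  rewrite IH AE !mulmxA.
  by rewrite -(mulmxA (invmx P *m T) P (invmx P)) (mulmxV Pun) mulmx1.
have Ak : forall k, cmx (A ^+ k) = (invmx P *m Di) *m B ^+ k *m (Dd *m P).
  move=> k; have -> : cmx (A ^+ k) = cmx A ^+ k by rewrite !cmxE rmorphXn.
  by rewrite AkT -BkE !mulmxA.
have BE : forall i j, B i j = e%:C%C ^+ i * T i j * (e%:C%C^-1) ^+ j.
  by move=> i j; rewrite /B mul_diag_mx mul_mx_diag !mxE.
have Bii : forall i, nc (B i i) = nc (T i i).
  move=> i; rewrite BE mulrC mulrA exprVn mulVf ?expf_neq0 // mul1r; done.
have Bij : forall i j, j != i -> nc (B i j) <= e * nc (T i j).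
  move=> i j ji; case: (ltngtP i j) => [ij|jil|/val_inj ij]; last by rewrite ij eqxx in ji.
    by rewrite BE (is_trig_mxP Ttrig) // mulr0 mul0r nc0 mulr0.
  rewrite BE !ncM !ncX ncV ncE0.
  have [d iE] : exists d, (i : nat) = (j + d.+1)%N.
    by exists (i - j.+1)%N; rewrite addnS -addSn subnKC.
  rewrite iE exprD exprS.
  have ee : e != 0 by rewrite gt_eqF.
  suff -> : e ^+ j * (e * e ^+ d) * nc (T i j) * e^-1 ^+ j = e * (e ^+ d * nc (T i j)).
    apply: ler_wpM2l; first exact: ltW.
    by apply: ler_piMl; [exact: nc_ge0 | apply: exprn_ile1 => //; exact: ltW].
  by rewrite exprVn; field; exact: expf_neq0.
have rowbB : rowb B q.
  move=> i0; rewrite (bigD1 i0) //= Bii /q; apply: lerD; first exact: rT.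
  apply: (@le_trans _ _ (\sum_(j0 | j0 != i0) e * nc (T i0 j0))); first by apply: ler_sum => j0 hj; exact: Bij.
  rewrite -mulr_sumr; apply: ler_wpM2l; first exact: ltW.
  apply: le_trans (rowb_total T i0).
  rewrite [X in _ <= X](bigD1 i0) //= lerDr; exact: nc_ge0.
move=> k i j.
have := rowb_entry i j (rowb_mul (rowb_mul (rowb_total (invmx P *m Di)) (rowb_pow rowbB q0 k) (exprn_ge0 k q0)) (rowb_total (Dd *m P)) _).
rewrite -Ak mxE nc_real mulrAC; apply.
by apply: sumr_ge0 => i' _; apply: sumr_ge0 => j' _; exact: nc_ge0.
Qed.
End NC.

End PartA.
Import PartA.

Module PartB.
Import Order.TTheory GRing.Theory Num.Theory.
Set Implicit Arguments. Unset Strict Implicit. Unset Printing Implicit Defensive.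
Import numFieldNormedType.Exports.
Local Open Scope ring_scope.
Local Open Scope classical_set_scope.

Section B.
Variable R : realType.

Lemma cvg_bigsum p (f : 'I_p -> nat -> R) (l : 'I_p -> R) :
  (forall i, f i @ \oo --> l i) ->
  (fun m => \sum_i f i m) @ \oo --> \sum_i l i.
Proof.
elim: p f l => [|p IH] f l h.
  rewrite big_ord0; under eq_fun do rewrite big_ord0; exact: cvg_cst.
rewrite big_ord_recr /=.
have -> : (fun m => \sum_(i < p.+1) f i m) =
          (fun m => \sum_(i < p) f (widen_ord (leqnSn p) i) m + f ord_max m).
  by apply: funext => m; rewrite big_ord_recr.
apply: cvgD; last exact: h.
by apply: IH => i; exact: h.
Qed.

Lemma trmxX n (A : 'M[R]_n.+1) k : (A ^+ k)^T = (A^T) ^+ k.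
Proof.
elim: k => [|k IH]; first by rewrite !expr0 trmx1.
by rewrite exprS exprSr -!mulmxE trmx_mul IH.
Qed.

Lemma quad_expand n (v : 'rV[R]_n) (M : 'M[R]_n) :
  (v *m M *m v^T) 0 0 = \sum_j \sum_i v 0 i * M i j * v 0 j.
Proof.
rewrite mxE; apply: eq_bigr => j _; rewrite !mxE mulr_suml.
by [].
Qed.


Lemma U_cvg n (A : 'M[R]_n.+1) : all_eig_lt1 A ->
  forall i j, cvgn (fun m => \sum_(k < m) (A ^+ k *m (A^T) ^+ k) i j).
Proof.
move=> hA i j.
have [c [q [q0 q1 hb]]] := pow_bound hA.
set u := fun k => (A ^+ k *m (A^T) ^+ k) i j.
have bound : forall k, `|u k| <= geometric (n.+1%:R * c ^+ 2) (q ^+ 2) k.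
  move=> k; rewrite /u /geometric /= mxE.
  apply: le_trans (ler_norm_sum _ _ _) _.
  apply: (@le_trans _ _ (\sum_(l < n.+1) (c * q ^+ k) * (c * q ^+ k))).
    apply: ler_sum => l _; rewrite -trmxX mxE normrM; apply: ler_pM => //; exact: hb.
  rewrite sumr_const card_ord -mulr_natl -exprM mulnC exprM expr2; rewrite le_eqVlt; apply/orP; left; apply/eqP; ring.
have : cvgn (series u).
  apply: normed_cvg.
  apply: (@series_le_cvg _ _ (geometric (n.+1%:R * c ^+ 2) (q ^+ 2))) => //.
  - by move=> k; exact: normr_ge0.
  - move=> k; rewrite /geometric /=; apply: mulr_ge0; last exact: exprn_ge0 (exprn_ge0 _ q0).
    by apply: mulr_ge0 => //; exact: sqr_ge0.
  - apply: is_cvg_geometric_series; rewrite ger0_norm ?exprn_ge0 //.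
    by rewrite expr2; nra.
have -> : (fun m => \sum_(k < m) (A ^+ k *m (A^T) ^+ k) i j) = series u.
  by apply: funext => m; rewrite /series /= big_mkord.
done.
Qed.

Lemma term_sym n (A : 'M[R]_n.+1) k i j :
  (A ^+ k *m (A^T) ^+ k) j i = (A ^+ k *m (A^T) ^+ k) i j.
Proof.
rewrite -trmxX; set M := A ^+ k.
have hT : (M *m M^T)^T = M *m M^T by rewrite trmx_mul trmxK.
by rewrite -[in LHS]hT mxE.
Qed.

Lemma U_sym n (A : 'M[R]_n.+1) i j : Umx A j i = Umx A i j.
Proof.
rewrite !mxE.
have -> : (fun m => \sum_(k < m) (A ^+ k *m (A^T) ^+ k) j i) =
          (fun m => \sum_(k < m) (A ^+ k *m (A^T) ^+ k) i j).
  by apply: funext => m; apply: eq_bigr => k _; exact: term_sym.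
done.
Qed.

Definition Sp n (A : 'M[R]_n.+1) (m : nat) : 'M[R]_n.+1 :=
  \sum_(k < m) (A ^+ k *m (A^T) ^+ k).

Lemma Q_lim n (A : 'M[R]_n.+1) : all_eig_lt1 A -> forall v : 'rV[R]_n.+1,
  (fun m => (v *m Sp A m *m v^T) 0 0) @ \oo --> (v *m Umx A *m v^T) 0 0.
Proof.
move=> hA v; rewrite quad_expand.
have -> : (fun m => (v *m Sp A m *m v^T) 0 0) =
   (fun m => \sum_j \sum_i v 0 i * (\sum_(k < m) (A ^+ k *m (A^T) ^+ k) i j) * v 0 j).
  by apply: funext => m; rewrite quad_expand /Sp; apply: eq_bigr => j _;
     apply: eq_bigr => i _; rewrite summxE.
apply: cvg_bigsum => j; apply: cvg_bigsum => i.
apply: cvgMr_tmp; apply: cvgMl_tmp; rewrite mxE; exact: U_cvg.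
Qed.

Lemma psd_term n (w : 'rV[R]_n) : 0 <= (w *m w^T) 0 0.
Proof. by rewrite mxE; apply: sumr_ge0 => l _; rewrite mxE -expr2 sqr_ge0. Qed.

Lemma Q_ge n (A : 'M[R]_n.+1) : all_eig_lt1 A -> forall v : 'rV[R]_n.+1,
  (v *m v^T) 0 0 <= (v *m Umx A *m v^T) 0 0.
Proof.
move=> hA v.
have E := cvg_lim (@Rhausdorff R) (Q_lim hA (v:=v)).
rewrite -E; apply: limr_ge; first by apply/cvg_ex; eexists; exact: (Q_lim hA (v:=v)).
exists 1%N => // m /= m1.
case: m m1 => // m _.
rewrite /Sp mulmx_sumr mulmx_suml summxE big_ord_recl /= expr0 expr0 mulmx1 mulmx1 lerDl.
apply: sumr_ge0 => k _.
rewrite -trmxX; set M := A ^+ _.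
have -> : v *m (M *m M^T) *m v^T = (v *m M) *m (v *m M)^T by rewrite trmx_mul !mulmxA.
exact: psd_term.
Qed.

Lemma Q_ge0 n (A : 'M[R]_n.+1) : all_eig_lt1 A -> forall v : 'rV[R]_n.+1,
  0 <= (v *m Umx A *m v^T) 0 0.
Proof. by move=> hA v; apply: le_trans (Q_ge hA v); exact: psd_term. Qed.

End B.

End PartB.
Import PartB.

Module PartC.
Import Order.TTheory GRing.Theory Num.Theory.
Set Implicit Arguments. Unset Strict Implicit. Unset Printing Implicit Defensive.
Import numFieldNormedType.Exports.
Local Open Scope ring_scope.

Section C.
Variable R : realType.
Local Notation C := (R[i]).

Lemma realC (x : R) : (x%:C%C : C) \is Num.real.
Proof. by rewrite complex_real. Qed.

Lemma conj_realC (x : R) : ((x%:C%C : C)^*)%R = x%:C%C.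
Proof. by apply: conj_Creal; exact: realC. Qed.

Lemma trmxC_mul m p q (M : 'M[C]_(m, p)) (N : 'M[C]_(p, q)) :
  ((M *m N) ^t* = N ^t* *m M ^t*)%sesqui.
Proof. by rewrite trmx_mul map_mxM. Qed.

Lemma sym_spectral n (U : 'M[R]_n.+1) : U^T = U ->
  exists d : 'I_n.+1 -> R, (forall i, eigenvalue U (d i)) /\
   forall c, (forall i, d i <= c) -> forall v : 'rV[R]_n.+1,
     (v *m U *m v^T) 0 0 <= c * (v *m v^T) 0 0.
Proof.
move=> UT.
set Uc := cmx U.
have Uh : Uc \is hermsymmx.
  apply: realsym_hermsym.
    apply/is_hermitianmxP; rewrite expr0 scale1r; apply/matrixP => i j.
    rewrite !mxE /=; have := congr1 (fun M : 'M[R]_n.+1 => M j i) UT; rewrite mxE => ->; done.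
  by apply/mxOverP => i j; rewrite mxE realC.
have /orthomx_spectralP UE := hermitian_normalmx Uh.
set Pm := spectralmx Uc in UE; set dd := spectral_diag Uc in UE.
have Pu : Pm \is unitarymx := spectral_unitarymx Uc.
have Pun := unitarymx_unit Pu.
have ddR : forall i, dd 0 i \is Num.real.
  by move=> i; have /mxOverP := hermitian_spectral_diag_real Uh; apply.
exists (fun i => complex.Re (dd 0 i)); split.
  move=> i.
  have : eigenvalue Uc (dd 0 i).
    apply/eigenvalueP; exists (delta_mx 0 i *m Pm).
      rewrite [in LHS]UE !mulmxA -(mulmxA (delta_mx 0 i) Pm (invmx Pm)) (mulmxV Pun) mulmx1.
      rewrite scalemxAl; congr (_ *m _); apply/matrixP => a b.
      rewrite mul_mx_diag !mxE; case: (eqVneq b i) => [->|bi].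
        by rewrite (ord1 a) eqxx /= mulr1 mul1r.
      by rewrite andbF /= mul0r mulr0.
    rewrite mulmx_free_eq0 ?row_free_unit //; apply/eqP => /matrixP /(_ 0 i).
    by rewrite !mxE !eqxx /= => /eqP; rewrite oner_eq0.
  rewrite -(RRe_real (ddR i)) !eigenvalue_root_char /Uc cmxE -map_char_poly.
  by rewrite fmorph_root.
move=> c hc v.
rewrite -lecR rmorphM /=.
set w := map_mx (real_complex R) v.
have wT : w^T = (w ^t*)%sesqui.
  by apply/matrixP => a b; rewrite !mxE conj_realC.
have Q1 : ((v *m U *m v^T) 0 0)%:C%C = (w *m Uc *m w^T) 0 0.
  by rewrite /w /Uc cmxE map_trmx -!map_mxM [RHS]mxE.
have Q2 : ((v *m v^T) 0 0)%:C%C = (w *m w^T) 0 0.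
  by rewrite /w map_trmx -!map_mxM [RHS]mxE.
rewrite Q1 Q2 UE invmx_unitary //.
set z := Pm *m w^T.
have zC : (z ^t*)%sesqui = w *m (Pm ^t*)%sesqui.
  by rewrite /z trmxC_mul wT trmxCK.
have E1 : w *m ((Pm ^t*)%sesqui *m diag_mx dd *m Pm) *m w^T = (z ^t*)%sesqui *m diag_mx dd *m z.
  by rewrite zC /z !mulmxA.
have E2 : w *m w^T = (z ^t*)%sesqui *m z.
  rewrite zC /z !mulmxA -(mulmxA w) -invmx_unitary // (mulVmx Pun) mulmx1 //.
rewrite E1 E2 mxE [X in _ <= _ * X]mxE mulr_sumr; apply: ler_sum => l _.
rewrite mul_mx_diag !mxE.
set y := \sum_j Pm l j * w^T j 0.
have zz : 0 <= y^* * y by rewrite mulrC -normCK exprn_ge0.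
rewrite mulrAC mulrC; apply: ler_wpM2r => //.
by rewrite -(RRe_real (ddR l)) lecR; exact: hc.
Qed.

Lemma lambda_bound n (A : 'M[R]_n.+1) : all_eig_lt1 A ->
  (0 < lambda_max (Umx A)) /\ (forall v : 'rV[R]_n.+1,
    (v *m Umx A *m v^T) 0 0 <= lambda_max (Umx A) * (v *m v^T) 0 0).
Proof.
move=> hA; set U := Umx A.
have UT : U^T = U by apply/matrixP => i j; rewrite mxE /U U_sym.
have [d [dE dB]] := sym_spectral UT.
set M := \sum_i `|d i|.
have hasub : has_ubound [set l : R | eigenvalue U l].
  exists M => l /= /eigenvalueP [u uU u0].
  have Qu : (u *m U *m u^T) 0 0 = l * (u *m u^T) 0 0.
    by rewrite uU -scalemxAl mxE.
  have upos : 0 < (u *m u^T) 0 0.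
    rewrite lt_def psd_term andbT; apply: contra u0 => /eqP h0.
    apply/eqP/matrixP => a b; rewrite (ord1 a) !mxE.
    move: h0; rewrite mxE => /eqP; rewrite psumr_eq0; last by move=> k _; rewrite mxE -expr2 sqr_ge0.
    move=> /allP /(_ b (mem_index_enum _)) /=; rewrite mxE -expr2 sqrf_eq0 => /eqP ->; done.
  have hM : forall i, d i <= M.
    move=> i; rewrite /M (bigD1 i) //= (le_trans (ler_norm _)) // lerDl.
    by apply: sumr_ge0 => k _; exact: normr_ge0.
  by have := dB M hM u; rewrite Qu ler_pM2r.
have dl : forall i, d i <= lambda_max U.
  by move=> i; apply: ub_le_sup => //; exact: dE.
have bnd : forall v : 'rV[R]_n.+1, (v *m U *m v^T) 0 0 <= lambda_max U * (v *m v^T) 0 0.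
  by move=> v; exact: dB _ dl v.
split => //.
set v := const_mx 1 : 'rV[R]_n.+1.
have vpos : 0 < (v *m v^T) 0 0.
  rewrite mxE; apply: (@lt_le_trans _ _ ((v 0 0 * v^T 0 0))).
    by rewrite !mxE mulr1 ltr01.
  rewrite (bigD1 0) //= lerDl; apply: sumr_ge0 => k _; rewrite !mxE mulr1; exact: ler01.
have := le_trans (Q_ge hA v) (bnd v).
rewrite -[X in X <= _]mul1r ler_pM2r // => l1; exact: lt_le_trans ltr01 l1.
Qed.

End C.

End PartC.
Import PartC.

Module PartD.
Import Order.TTheory GRing.Theory Num.Theory.
Set Implicit Arguments. Unset Strict Implicit. Unset Printing Implicit Defensive.
Import numFieldNormedType.Exports.
Local Open Scope ring_scope.

Section D.
Variables (R : realType) (n : nat) (U : 'M[R]_n).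
Hypothesis UT : U^T = U.
Hypothesis Upsd : forall v : 'rV[R]_n, 0 <= (v *m U *m v^T) 0 0.

Definition Bf (a b : 'rV[R]_n) := (a *m U *m b^T) 0 0.

Lemma Bf_sym a b : Bf b a = Bf a b.
Proof.
have h : (b *m U *m a^T)^T = a *m U *m b^T by rewrite !trmx_mul trmxK UT mulmxA.
by rewrite /Bf -h [RHS]mxE.
Qed.

Lemma BfDl a b c : Bf (a + b) c = Bf a c + Bf b c.
Proof. by rewrite /Bf !mulmxDl mxE. Qed.
Lemma BfDr a b c : Bf a (b + c) = Bf a b + Bf a c.
Proof. by rewrite /Bf linearD /= !mulmxDr mxE. Qed.
Lemma BfZl k a b : Bf (k *: a) b = k * Bf a b.
Proof. by rewrite /Bf -!scalemxAl mxE. Qed.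
Lemma BfZr k a b : Bf a (k *: b) = k * Bf a b.
Proof. by rewrite /Bf linearZ /= -!scalemxAr mxE. Qed.

Lemma Bf_CS a b : Bf a b ^+ 2 <= Bf a a * Bf b b.
Proof.
have key : forall t, 0 <= Bf a a + 2 * t * Bf a b + t ^+ 2 * Bf b b.
  move=> t; have := Upsd (a + t *: b); rewrite -/(Bf _ _) BfDl !BfDr !BfZl !BfZr Bf_sym.
  by move=> h; apply: le_trans h _; rewrite le_eqVlt; apply/orP; left; apply/eqP; ring.
have Qa := Upsd a; have Qb := Upsd b; rewrite -/(Bf a a) -/(Bf b b) in Qa Qb.
set qa := Bf a a in key Qa *; set qb := Bf b b in key Qb *; set B := Bf a b in key *.
have [qb0|qbp] := eqVneq qb 0.
  rewrite qb0 mulr0.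
  have [->|B0] := eqVneq B 0; first by rewrite expr0n.
  have := key (- (qa + 1) / (2 * B)); rewrite qb0 mulr0 addr0.
  have -> : 2 * (- (qa + 1) / (2 * B)) * B = - (qa + 1) by field.
  lra.
have qbpos : 0 < qb by rewrite lt_def qbp Qb.
have := key (- B / qb).
have -> : qa + 2 * (- B / qb) * B + (- B / qb) ^+ 2 * qb = qa - B ^+ 2 / qb by field.
move=> h; have : B ^+ 2 / qb <= qa by lra.
by rewrite ler_pdivrMr // mulrC.
Qed.
Lemma Unorm_Bf a : Unorm U a = Num.sqrt (Bf a a).
Proof. by []. Qed.

Lemma Unorm_ge0 a : 0 <= Unorm U a.
Proof. exact: sqrtr_ge0. Qed.

Lemma Unorm_sq a : Unorm U a ^+ 2 = Bf a a.
Proof. by rewrite Unorm_Bf sqr_sqrtr //; exact: Upsd. Qed.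

Lemma UnormZ k a : Unorm U (k *: a) = `|k| * Unorm U a.
Proof.
rewrite !Unorm_Bf BfZl BfZr mulrA -expr2 sqrtrM ?sqr_ge0 //.
by rewrite sqrtr_sqr.
Qed.

Lemma Unorm_tri a b : Unorm U (a + b) <= Unorm U a + Unorm U b.
Proof.
have x0 := Unorm_ge0 a; have y0 := Unorm_ge0 b.
have xa := Unorm_sq a; have yb := Unorm_sq b.
have cs := Bf_CS a b.
set x := Unorm U a in x0 xa *; set y := Unorm U b in y0 yb *.
have Bxy : Bf a b <= x * y.
  rewrite -xa -yb -exprMn in cs.
  have P0 : 0 <= x * y by exact: mulr_ge0.
  move: cs P0; set P := x * y; set B := Bf a b; nra.
rewrite Unorm_Bf BfDl !BfDr (Bf_sym a b) -(ger0_norm (addr_ge0 x0 y0)) -sqrtr_sqr.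
apply: ler_wsqrtr; rewrite -xa -yb; nra.
Qed.
End D.

End PartD.
Import PartD.

Module PartE.
Import Order.TTheory GRing.Theory Num.Theory.
Set Implicit Arguments. Unset Strict Implicit. Unset Printing Implicit Defensive.
Import numFieldNormedType.Exports.
Local Open Scope ring_scope.

Section E.
Variable R : realType.

Lemma exists_argmax n (c : 'I_n.+1 -> R) : exists t, forall s, c s <= c t.
Proof.
case: (@arg_maxP _ _ _ ord0 xpredT c isT) => t _ ht; exists t => s; exact: ht.
Qed.

Lemma sum_ind n (t : 'I_n) (K : R) : \sum_s (s == t)%:R * K = K.
Proof.
rewrite (bigD1 t) //= eqxx mul1r big1 ?addr0 // => s /negbTE ->; by rewrite mul0r.
Qed.

Definition tri (v : R) := [\/ v = 0, v = 2^-1 | v = 1].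

Lemma tri_gap (u v : R) : tri u -> tri v -> u < v -> 1 <= 2 * (v - u).
Proof. by case=> ->; case=> ->; lra. Qed.

Lemma tri_ge0 (u : R) : tri u -> 0 <= u.
Proof. by case=> ->; lra. Qed.

Lemma transfer n (c x z0 : 'I_n.+1 -> R) (a : R) :
  (forall s, tri (c s)) ->
  (forall s, 0 <= x s) -> (forall s, 0 <= z0 s) -> \sum_s z0 s = 1 ->
  a <= \sum_s c s * z0 s ->
  0 < a * (\sum_s x s) - \sum_s c s * x s ->
  exists x' : 'I_n.+1 -> R, [/\ forall s, 0 <= x' s, \sum_s x' s = \sum_s x s,
     a * \sum_s x s <= \sum_s c s * x' s &
     \sum_s (x' s - x s) ^+ 2 <= 8 * (a * \sum_s x s - \sum_s c s * x s) ^+ 2].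
Proof.
move=> ctri x0 z00 z01 az0 gpos.
set m := \sum_s x s in gpos *; set f := \sum_s c s * x s in gpos *.
set g := a * m - f in gpos *.
have m0 : 0 <= m by apply: sumr_ge0 => s _.
have [t ht] := exists_argmax c.
set cm := c t.
have acm : a <= cm.
  apply: le_trans az0 _; rewrite -[cm]mulr1 -z01 mulr_sumr.
  by apply: ler_sum => s _; apply: ler_wpM2r.
set G := \sum_s (cm - c s) * x s.
have GE : G = cm * m - f.
  by rewrite /G /f /m mulr_sumr -sumrB; apply: eq_bigr => s _; rewrite mulrBl.
have gG : g <= G by rewrite GE /g; apply: lerB => //; apply: ler_wpM2r.
have Gpos : 0 < G by apply: lt_le_trans gG.
set th := g / G.
have th0 : 0 < th by rewrite divr_gt0.
have th1 : th <= 1 by rewrite ler_pdivrMr // mul1r.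
have thG : th * G = g by rewrite /th mulfVK // gt_eqF.
set w := fun s => if c s < cm then x s else 0.
set W := \sum_s w s.
have w0 : forall s, 0 <= w s by move=> s; rewrite /w; case: ifP.
have wx : forall s, w s <= x s by move=> s; rewrite /w; case: ifP.
have wt : w t = 0 by rewrite /w ltxx.
have wG : forall s, (cm - c s) * x s = (cm - c s) * w s.
  move=> s; rewrite /w; case: ifP => // /negbT; rewrite -leNgt => h.
  have -> : c s = cm by apply/eqP; rewrite eq_le h ht.
  by rewrite subrr !mul0r.
have w2 : forall s, w s <= 2 * ((cm - c s) * w s).
  move=> s; rewrite /w; case: ifP => [h|_]; last by rewrite !mulr0.
  have := tri_gap (ctri s) (ctri t) h; have := x0 s; rewrite /cm; nra.
have WG : W <= 2 * G.
  rewrite /W /G mulr_sumr; apply: ler_sum => s _; rewrite wG; exact: w2.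
exists (fun s => x s - th * w s + (s == t)%:R * (th * W)); split.
- have W0 : 0 <= W by apply: sumr_ge0 => s _.
  move=> s; apply: addr_ge0; last by apply: mulr_ge0; [exact: ler0n | apply: mulr_ge0 => //; exact: ltW].
  rewrite subr_ge0; apply: le_trans (wx s); rewrite -[X in _ <= X]mul1r.
  by apply: ler_wpM2r.
- by rewrite big_split /= sum_ind sumrB -mulr_sumr -/W -/m subrK.
- rewrite (_ : \sum_s c s * (x s - th * w s + (s == t)%:R * (th * W)) = f + th * G).
    by rewrite thG /g; lra.
  have -> : G = \sum_s (cm - c s) * w s by apply: eq_bigr => s _; exact: wG.
  rewrite /f mulr_sumr -big_split /=.
  rewrite [X in _ = X](_ : _ = \sum_s (c s * x s + th * ((cm - c s) * w s))) //.
  have L : \sum_s c s * (x s - th * w s + (s == t)%:R * (th * W)) =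
      \sum_s (c s * x s - th * (c s * w s)) + cm * (th * W).
    rewrite -(sum_ind t (cm * (th * W))) -big_split; apply: eq_bigr => s _ /=.
    case: (eqVneq s t) => [->|st]; rewrite ?eqxx ?(negbTE st) /cm /=; ring.
  have Rr : \sum_s (c s * x s + th * ((cm - c s) * w s)) =
      \sum_s (c s * x s - th * (c s * w s)) + cm * (th * W).
    rewrite /W mulr_sumr mulr_sumr -big_split; apply: eq_bigr => s _ /=; ring.
  by rewrite L Rr.
- have W0 : 0 <= W by apply: sumr_ge0 => s _.
  have wW : forall s, w s <= W.
    move=> s; rewrite /W (bigD1 s) //= lerDl; exact: sumr_ge0.
  rewrite (bigD1 t) //= eqxx wt.
  have -> : x t - th * 0 + 1%:R * (th * W) - x t = th * W by ring.
  have hs : \sum_(s | s != t) (x s - th * w s + (s == t)%:R * (th * W) - x s) ^+ 2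
            <= th ^+ 2 * W ^+ 2.
    apply: (@le_trans _ _ (\sum_(s | s != t) th ^+ 2 * (w s * W))).
      apply: ler_sum => s st; rewrite (negbTE st) /=.
      have -> : x s - th * w s + 0%:R * (th * W) - x s = - (th * w s) by ring.
      rewrite sqrrN exprMn; apply: ler_wpM2l; first exact: sqr_ge0.
      by rewrite expr2; apply: ler_wpM2l.
    rewrite -mulr_sumr; apply: ler_wpM2l; first exact: sqr_ge0.
    rewrite -mulr_suml expr2; apply: ler_wpM2r => //.
    rewrite [X in _ <= X](bigD1 t) //= lerDr; exact: w0.
  rewrite -thG.
  have : th * W <= 2 * (th * G) by nra.
  move: hs; set S2 := \sum_(s | s != t) _; move=> hs h2.
  have thW0 : 0 <= th * W by apply: mulr_ge0 => //; exact: ltW.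
  rewrite -exprMn in hs; nra.
Qed.
End E.

End PartE.
Import PartE.

Module PartF.
Import Order.TTheory GRing.Theory Num.Theory.
Set Implicit Arguments. Unset Strict Implicit. Unset Printing Implicit Defensive.
Import numFieldNormedType.Exports.
Local Open Scope ring_scope.

Section F.
Variable R : realType.

Lemma pibar_tri n (y : 'I_n -> bool -> R) (st : 'I_n) (b : bool) :
  (forall s a, 0 <= y s a) ->
  (forall s, 0 < y s false -> 0 < y s true -> s = st) ->
  forall s, s != st -> tri (pibar y b s).
Proof.
move=> y0 uq s sst; rewrite /pibar.
case: ifP => [pos|_]; last by rewrite div1r /tri; constructor 2.
have [f0|fpos] := eqVneq (y s false) 0.
  have tpos : 0 < y s true by move: pos; rewrite f0 add0r.
  by case: b; rewrite f0 add0r /tri; [constructor 3; rewrite divff // gt_eqF | constructor 1; rewrite mul0r].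
have [t0|tpos] := eqVneq (y s true) 0.
  by case: b; rewrite t0 addr0 /tri; [constructor 1; rewrite mul0r | constructor 3; rewrite divff].
exfalso; move/negP: sst; apply; apply/eqP; apply: uq.
  by rewrite lt_def fpos y0.
by rewrite lt_def tpos y0.
Qed.

Lemma card_part n N (arm : 'I_N -> 'I_n) (D : {set 'I_N}) :
  (\sum_s #|[set i in D | arm i == s]|)%N = #|D|.
Proof.
rewrite -sum1_card (partition_big arm xpredT) //=.
apply: eq_bigr => s _; rewrite -sum1_card; apply: eq_bigl => i; by rewrite inE.
Qed.

Lemma xD_sum n N (arm : 'I_N -> 'I_n) (D : {set 'I_N}) :
  \sum_s xD R arm D 0 s = mD R D.
Proof.
rewrite /mD -(card_part arm D) natr_sum mulr_suml; apply: eq_bigr => s _; by rewrite mxE.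
Qed.

Lemma xD_ge0 n N (arm : 'I_N -> 'I_n) (D : {set 'I_N}) s : 0 <= xD R arm D 0 s.
Proof. by rewrite mxE divr_ge0. Qed.

Lemma core n (U : 'M[R]_n.+1) (UT : U^T = U)
  (Upsd : forall v : 'rV[R]_n.+1, 0 <= (v *m U *m v^T) 0 0)
  (lam : R) (lam0 : 0 < lam)
  (lamB : forall v : 'rV[R]_n.+1, (v *m U *m v^T) 0 0 <= lam * (v *m v^T) 0 0)
  (y : 'I_n.+1 -> bool -> R) (st : 'I_n.+1) (b : bool) (rhs eta k : R) (N : nat)
  (x : 'rV[R]_n.+1) (m : R) :
  (forall s, s != st -> tri (pibar y b s)) ->
  0 < rhs -> eta <= socp_value U y st b rhs ->
  (exists z, socp_feasible y st b rhs z) ->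
  (forall s, 0 <= x 0 s) -> \sum_s x 0 s = m -> 0 < k -> (0 < N)%N ->
  Unorm U (x - m *: mustar y) <= eta * m - 2 * Num.sqrt 2 * Num.sqrt lam * k / N%:R ->
  \sum_(s < n.+1 | s != st) pibar y b s * x 0 s <= rhs * m - k / N%:R.
Proof.
move=> ctri rhs0 etaS [z0 z0f] x0 xm k0 N0 H.
have [hz1 hz2 hz3] := z0f.
set eps := 2 * Num.sqrt 2 * Num.sqrt lam * k / N%:R in H.
have N0' : 0 < N%:R :> R by rewrite ltr0n.
have s2 : 0 < Num.sqrt 2 :> R by rewrite sqrtr_gt0.
have sl : 0 < Num.sqrt lam by rewrite sqrtr_gt0.
set kn := k / N%:R.
have kn0 : 0 < kn by rewrite divr_gt0.
have epsE : eps = 2 * Num.sqrt 2 * Num.sqrt lam * kn by rewrite /eps /kn mulrA.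
have eps0 : 0 < eps by rewrite epsE; apply: mulr_gt0 => //; apply: mulr_gt0 => //; apply: mulr_gt0.
have eps2 : eps ^+ 2 = 8 * lam * kn ^+ 2.
  rewrite epsE !exprMn !sqr_sqrtr ?ltW //; ring.
have Unn : forall v, 0 <= Unorm U v := Unorm_ge0 U.
have m0 : 0 <= m by rewrite -xm; apply: sumr_ge0.
have mpos : 0 < m.
  rewrite lt_def m0 andbT; apply/eqP => m00.
  move: H; rewrite m00 mulr0 sub0r => H.
  have := le_trans (Unn _) H; rewrite oppr_ge0 => h.
  by move: eps0; rewrite ltNge h.
rewrite leNgt; apply/negP => hlt.
set c := fun s => if s == st then 0 else pibar y b s.
have cE : forall (u : 'rV[R]_n.+1),
    \sum_(s < n.+1 | s != st) pibar y b s * u 0 s = \sum_s c s * u 0 s.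
  move=> u; rewrite big_mkcond /=; apply: eq_bigr => s _; rewrite /c.
  by case: (eqVneq s st) => _ //=; rewrite mul0r.
have ctri' : forall s, tri (c s).
  by move=> s; rewrite /c; case: ifP => [_|/negbT h]; [constructor 1 | exact: ctri].
have z0sum : \sum_s z0 0 s = 1.
  transitivity ((z0 *m (onesr R n.+1)^T) 0 0); last by rewrite hz2 mxE.
  by rewrite mxE; apply: eq_bigr => s _; rewrite !mxE mulr1.
have az0 : rhs <= \sum_s c s * z0 0 s by rewrite -cE.
set f := \sum_s c s * x 0 s.
have hlt' : rhs * m - kn < f by rewrite /f -cE.
have [x' [x'0 x'm x'f x'd]] : exists x' : 'I_n.+1 -> R, [/\ forall s, 0 <= x' s,
    \sum_s x' s = m, rhs * m <= \sum_s c s * x' s &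
    \sum_s (x' s - x 0 s) ^+ 2 < 8 * kn ^+ 2].
  have [gle|ggt] := lerP (rhs * m - f) 0.
    exists (fun s => x 0 s); split => //; first by rewrite -/f; lra.
    rewrite big1; last by move=> s _; rewrite subrr expr0n.
    by rewrite mulr_gt0 // exprn_gt0.
  have := @transfer R n c (fun s => x 0 s) (fun s => z0 0 s) rhs ctri' x0 hz3 z0sum az0.
  rewrite xm -/f => /(_ ggt) [x' [h1 h2 h3 h4]].
  exists x'; split => //.
  apply: le_lt_trans h4 _; rewrite ltr_pM2l //.
  have g0 := ggt; have gk : rhs * m - f < kn by lra.
  set g := rhs * m - f in g0 gk *; nra.
set xr := \row_s x' s.
set v := xr - x.
have vv : (v *m v^T) 0 0 = \sum_s (x' s - x 0 s) ^+ 2.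
  by rewrite mxE; apply: eq_bigr => s _; rewrite !mxE expr2.
have Uv : Unorm U v < eps.
  have h := lamB v; have u2 := Unorm_sq Upsd v; have un := Unn v.
  rewrite vv in h; rewrite /Bf in u2.
  have : Unorm U v ^+ 2 < eps ^+ 2.
    rewrite u2 eps2; apply: le_lt_trans h _; nra.
  move: un eps0; set u := Unorm U v; nra.
set mu := mustar y.
set z := m^-1 *: xr.
have zfeas : socp_feasible y st b rhs z.
  split.
  - rewrite cE.
    have -> : \sum_s c s * z 0 s = m^-1 * \sum_s c s * x' s.
      by rewrite mulr_sumr; apply: eq_bigr => s _; rewrite !mxE mulrCA.
    by rewrite -(ler_pM2l mpos) mulrA mulfV ?gt_eqF // mul1r mulrC.
  - apply/matrixP => i j; rewrite (ord1 i) (ord1 j) mxE [RHS]mxE eqxx /=.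
    have -> : \sum_j0 z 0 j0 * (onesr R n.+1)^T j0 0 = m^-1 * \sum_s x' s.
      by rewrite mulr_sumr; apply: eq_bigr => s _; rewrite !mxE mulr1.
    by rewrite x'm mulVf ?gt_eqF.
  - move=> s; rewrite !mxE; apply: mulr_ge0; [rewrite invr_ge0; exact: m0 | exact: x'0].
have etaz : eta <= Unorm U (z - mu).
  apply: le_trans etaS _; apply: ge_inf; last by exists z.
  by exists 0 => _ [z' _ <-]; exact: Unn.
have E1 : xr - m *: mu = m *: (z - mu).
  by rewrite scalerBr /z scalerA mulfV ?gt_eqF // scale1r.
have E2 : xr - m *: mu = (x - m *: mu) + v.
  by apply/matrixP => i j; rewrite /v !mxE; ring.
have := Unorm_tri UT Upsd (x - m *: mu) v; rewrite -E2 E1 UnormZ ger0_norm // => h.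
have : eta * m <= Unorm U (z - mu) * m by apply: ler_wpM2r.
move: h H Uv etaz; rewrite -/mu.
set A1 := Unorm U (z - mu); set A2 := Unorm U (x - m *: mu); set A3 := Unorm U v.
nra.
Qed.

End F.

End PartF.
Import PartF.

Unset Implicit Arguments. Set Strict Implicit. Set Printing Implicit Defensive.
Local Open Scope ring_scope.

Theorem mainTheorem14 (R : realType) (n : nat)
  (P : 'I_n -> bool -> 'I_n -> R) (r : 'I_n -> bool -> R) (alpha : R)
  (ystar : 'I_n -> bool -> R) (st : 'I_n) :
  stochastic P ->
  0 < alpha < 1 ->
  LP_optimal P r alpha ystar ->
  (* Assumption 1 *)
  assumption1 (Ppibar P ystar) ->
  (* Assumption 2: st is the unique state with both y*(s,0), y*(s,1) > 0 *)
  (0 < ystar st false /\ 0 < ystar st true) ->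
  (forall s, 0 < ystar s false -> 0 < ystar s true -> s = st) ->
  (* Assumption 3 *)
  all_eig_lt1 (Phi P ystar alpha st) ->
  let U := Umx (Phi P ystar alpha st) in
  (* (P1) and (P2) feasible *)
  (exists z, socp_feasible ystar st true alpha z) ->
  (exists z, socp_feasible ystar st false (1 - alpha) z) ->
  let eta1 := socp_value U ystar st true alpha in
  let eta2 := socp_value U ystar st false (1 - alpha) in
  let eta := Num.min eta1 eta2 in
  let k := (#|Sempty ystar|.+1)%:R : R in
  forall (N : nat) (arm : 'I_N -> 'I_n) (D : {set 'I_N}),
    (0 < N)%N ->
    let epsfe := 2 * Num.sqrt 2 * Num.sqrt (lambda_max U) * k / N%:R in
    Unorm U (xD R arm D - mD R D *: mustar ystar) <= eta * mD R D - epsfe ->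
    \sum_(s < n | s != st) pibar ystar true s * xD R arm D ord0 s
      <= alpha * mD R D - k / N%:R /\
    \sum_(s < n | s != st) pibar ystar false s * xD R arm D ord0 s
      <= (1 - alpha) * mD R D - k / N%:R.
Proof.
case: n P r ystar st => [|n] P r ystar st; first by case: st.
move=> Pst /andP[al0 al1] LPo A1 [stf stt] uq hA3 U hP1 hP2 eta1 eta2 eta k N arm D N0 epsfe H.
have y0 : forall s a, 0 <= ystar s a by case: LPo => [[y0 _ _ _] _].
have [lam0 lamB] := lambda_bound hA3.
have UT : U^T = U by apply/matrixP => i j; rewrite mxE /U U_sym.
have Upsd := Q_ge0 hA3.
have k0 : 0 < k by rewrite /k ltr0n.
split.
- have h := (core (eta:=eta) (k:=k) (N:=N) (x:=xD R arm D) (m:=mD R D) UT Upsd lam0 lamB _ al0 _ hP1 (@xD_ge0 R _ _ arm D) (@xD_sum R _ _ arm D) k0 N0).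
  apply: h.
  + exact: (@pibar_tri R n.+1 ystar st true y0 uq).
  + by rewrite /eta ge_min lexx.
  + exact: H.
- have al1' : 0 < 1 - alpha by rewrite subr_gt0.
  have h := (core (eta:=eta) (k:=k) (N:=N) (x:=xD R arm D) (m:=mD R D) UT Upsd lam0 lamB _ al1' _ hP2 (@xD_ge0 R _ _ arm D) (@xD_sum R _ _ arm D) k0 N0).
  apply: h.
  + exact: (@pibar_tri R n.+1 ystar st false y0 uq).
  + by rewrite /eta ge_min lexx orbT.
  + exact: H.
Qed.
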